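(* In the setting described in the context, if a linear operator $T:\mathcal{H}\to\mathcal{H}$ is compact and $\psi_z\to0$ weakly in $H_2$ as $z\to\infty$, then $T$ is weakly compact.
   Context: Setting: $H_1,H_2$ are separable Hilbert spaces, $G$ is a separable locally compact group with left Haar measure $dz$. $\{E_N\}_{N\in\mathbb{N}}$ is a fixed sequence of open precompact subsets of $G$ with $E_N\subseteq E_{N+1}$, $E_N^{-1}=E_N$, $E_NE_N\subseteq E_{2N}$, $\bigcup_NE_N=G$. $\{\psi_z\}_{z\in G}\subseteq H_2$ is a bounded, norm-continuous family forming a continuous Parseval frame: $\langle f,g\rangle_{H_2}=\int_G\langle f,\psi_z\rangle\langle\psi_z,g\rangle\,dz$. $\mathcal{H}=H_1\widehat\otimes H_2$ is the Hilbert space tensor product. For $f\in\mathcal{H}$, $g\in H_2$, $\langle f,g\rangle_{H_2}\in H_1$ is the continuous extension of $\sum c_na_n\otimes b_n\mapsto\sum c_na_n\langle b_n,g\rangle_{H_2}$. For linear $T$ on $\mathcal{H}$ and $z,w\in G$, $T_{(z,w)}h:=\langle T(h\otimes\psi_z),\psi_w\rangle_{H_2}$ for $h\in H_1$. $T$ is weakly compact if each $T_{(z,w)}$ is compact on $H_1$ and for every $M>0$, $\lim_{z\to\infty}\sup_{w\in zE_M}\|T_{(z,w)}\|_{H_1\to H_1}=0$; here $z\to\infty$ means $z$ eventually leaves every compact subset of $G$. *)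

(* Defs.v *)
From HB Require Import structures.
From mathcomp Require Import all_boot all_order all_algebra.
From mathcomp Require Import all_classical all_reals all_analysis.
From mathcomp Require Import complex.
Set Implicit Arguments.
Unset Strict Implicit.
Unset Printing Implicit Defensive.
Import Order.TTheory GRing.Theory Num.Theory.
Local Open Scope ring_scope.
Local Open Scope classical_set_scope.

Section Hilbert.
Variable C : numClosedFieldType.

Definition is_inner_product (V : lmodType C) (ip : V -> V -> C) : Prop :=
  [/\ (forall (a : C) (x y z : V), ip (a *: x + y) z = a * ip x z + ip y z),
      (forall x y : V, ip y x = (ip x y)^*),
      (forall x : V, 0 <= ip x x) &
      (forall x : V, ip x x = 0 -> x = 0)].

Definition ipnorm (V : lmodType C) (ip : V -> V -> C) (x : V) : C :=
  sqrtC (ip x x).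

Definition ip_cvg (V : lmodType C) (ip : V -> V -> C) (u : nat -> V) (l : V) :=
  forall eps : C, 0 < eps ->
    exists N : nat, forall n, (N <= n)%N -> ipnorm ip (u n - l) < eps.

Definition ip_cauchy (V : lmodType C) (ip : V -> V -> C) (u : nat -> V) :=
  forall eps : C, 0 < eps ->
    exists N : nat, forall m n, (N <= m)%N -> (N <= n)%N ->
      ipnorm ip (u m - u n) < eps.

Definition is_sep_hilbert (V : lmodType C) (ip : V -> V -> C) : Prop :=
  [/\ is_inner_product ip,
      (forall u : nat -> V, ip_cauchy ip u -> exists l, ip_cvg ip u l) &
      (exists d : nat -> V, forall (x : V) (eps : C), 0 < eps ->
          exists n, ipnorm ip (x - d n) < eps)].

Definition is_linear_map (V W : lmodType C) (T : V -> W) : Prop :=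
  forall (a : C) (x y : V), T (a *: x + y) = a *: T x + T y.

Definition compact_op (V W : lmodType C) (ipV : V -> V -> C) (ipW : W -> W -> C)
    (T : V -> W) : Prop :=
  is_linear_map T /\
  forall u : nat -> V, (exists B : C, forall n, ipnorm ipV (u n) <= B) ->
    exists phi : nat -> nat, (forall n, (phi n < phi n.+1)%N) /\
      exists l : W, ip_cvg ipW (fun n => T (u (phi n))) l.

Definition opnorm_le (V W : lmodType C) (ipV : V -> V -> C) (ipW : W -> W -> C)
    (T : V -> W) (c : C) : Prop :=
  forall h : V, ipnorm ipW (T h) <= c * ipnorm ipV h.

(* H = H1 (hat-tensor) H2 : tens is bilinear, <a(x)b, c(x)d> = <a,c><b,d>, and
   the algebraic tensors sum_n c_n a_n (x) b_n are dense in H. *)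
Definition is_hilbert_tensor (H1 H2 H : lmodType C)
    (ip1 : H1 -> H1 -> C) (ip2 : H2 -> H2 -> C) (ip : H -> H -> C)
    (tens : H1 -> H2 -> H) : Prop :=
  [/\ (forall (c : C) (a a' : H1) (b : H2),
          tens (c *: a + a') b = c *: tens a b + tens a' b),
      (forall (c : C) (a : H1) (b b' : H2),
          tens a (c *: b + b') = c *: tens a b + tens a b'),
      (forall (a c : H1) (b d : H2), ip (tens a b) (tens c d) = ip1 a c * ip2 b d) &
      (forall (f : H) (eps : C), 0 < eps ->
          exists s : seq (C * H1 * H2),
            ipnorm ip (f - \sum_(t <- s) t.1.1 *: tens t.1.2 t.2) < eps)].

(* <f, g>_{H2} in H1 : the continuous extension (in f) of
   sum_n c_n a_n (x) b_n |-> sum_n c_n a_n <b_n, g>_{H2} *)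
Definition is_partial_ip (H1 H2 H : lmodType C)
    (ip1 : H1 -> H1 -> C) (ip2 : H2 -> H2 -> C) (ip : H -> H -> C)
    (tens : H1 -> H2 -> H) (pip : H -> H2 -> H1) : Prop :=
  forall g : H2,
    (forall s : seq (C * H1 * H2),
        pip (\sum_(t <- s) t.1.1 *: tens t.1.2 t.2) g
        = \sum_(t <- s) (t.1.1 * ip2 t.2 g) *: t.1.2) /\
    (forall (f : H) (eps : C), 0 < eps -> exists2 delta : C, 0 < delta &
        forall f' : H, ipnorm ip (f' - f) < delta ->
          ipnorm ip1 (pip f' g - pip f g) < eps).

End Hilbert.

Section Groups.
Variable G : ptopologicalType.

Definition is_sep_lc_group (mul : G -> G -> G) (inv : G -> G) (e : G) : Prop :=
  [/\ [/\ (forall x y z, mul x (mul y z) = mul (mul x y) z),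
          (forall x, mul e x = x) /\ (forall x, mul x e = x) &
          (forall x, mul (inv x) x = e) /\ (forall x, mul x (inv x) = e)],
      continuous (fun p : G * G => mul p.1 p.2) /\ continuous inv,
      hausdorff_space G,
      (forall x : G, exists2 K : set G, compact K & nbhs x K) &
      (exists D : set G, countable D /\ closure D = setT)].

Definition borelG := g_sigma_algebraType (@open G).

Definition is_left_haar (R : realType) (mul : G -> G -> G)
    (mu : {measure set borelG -> \bar R}) : Prop :=
  [/\ (0 < mu setT)%E,
      (forall (x : G) (A : set borelG), measurable A ->
          mu (mul x @` A) = mu A),
      (forall K : set G, compact K -> (mu K < +oo)%E),
      (forall A : set borelG, measurable A ->
          mu A = ereal_inf [set mu U | U in [set U : set G | open U /\ A `<=` U]]) &
      (forall U : set G, open U ->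
          mu U = ereal_sup [set mu K | K in [set K : set G | compact K /\ K `<=` U]])].

Definition is_exhaustion (mul : G -> G -> G) (inv : G -> G) (E : nat -> set G) : Prop :=
  [/\ (forall N, open (E N) /\ compact (closure (E N))),
      (forall N, E N `<=` E N.+1),
      (forall N, inv @` E N = E N),
      (forall N, [set mul a b | a in E N & b in E N] `<=` E (2 * N)%N) &
      \bigcup_N E N = setT].

Definition tends_to_zero_at_infty (R : realType) (F : G -> R[i]) : Prop :=
  forall eps : R[i], 0 < eps ->
    exists2 K : set G, compact K & forall z, ~ K z -> `|F z| < eps.

End Groups.

(* bounded, norm-continuous continuous Parseval frame {psi_z} in H2:
   <f,g> = int_G <f,psi_z><psi_z,g> dz   (complex integral = integrals of the
   real and imaginary parts) *)
Definition is_cont_parseval_frame (R : realType) (G : ptopologicalType)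
    (mu : {measure set borelG G -> \bar R})
    (H2 : lmodType R[i]) (ip2 : H2 -> H2 -> R[i]) (psi : G -> H2) : Prop :=
  [/\ (exists B : R[i], forall z, ipnorm ip2 (psi z) <= B),
      (forall (z : G) (eps : R[i]), 0 < eps ->
          nbhs z [set z' | ipnorm ip2 (psi z' - psi z) < eps]) &
      (forall f g : H2,
        let F := fun z : borelG G => ip2 f (psi z) * ip2 (psi z) g in
        [/\ mu.-integrable setT (fun z => (complex.Re (F z))%:E),
            mu.-integrable setT (fun z => (complex.Im (F z))%:E),
            (complex.Re (ip2 f g))%:E = (\int[mu]_z (complex.Re (F z))%:E)%E &
            (complex.Im (ip2 f g))%:E = (\int[mu]_z (complex.Im (F z))%:E)%E])].

Definition Tzw (C : numClosedFieldType) (G : Type) (H1 H2 H : lmodType C)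
    (tens : H1 -> H2 -> H) (pip : H -> H2 -> H1) (psi : G -> H2)
    (T : H -> H) (z w : G) : H1 -> H1 :=
  fun h => pip (T (tens h (psi z))) (psi w).

Definition weakly_compact (R : realType) (G : ptopologicalType)
    (mul : G -> G -> G) (E : nat -> set G)
    (H1 H2 H : lmodType R[i]) (ip1 : H1 -> H1 -> R[i])
    (tens : H1 -> H2 -> H) (pip : H -> H2 -> H1) (psi : G -> H2)
    (T : H -> H) : Prop :=
  (forall z w : G, compact_op ip1 ip1 (Tzw tens pip psi T z w)) /\
  (forall M : nat, (0 < M)%N ->
     forall eps : R[i], 0 < eps ->
       exists2 K : set G, compact K &
         forall z : G, ~ K z ->
           forall w : G, (exists2 x, E M x & w = mul z x) ->
             opnorm_le ip1 ip1 (Tzw tens pip psi T z w) eps).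

(* Main.v *)
Set Warnings "-all".
Require Import Defs.
From HB Require Import structures.
From mathcomp Require Import all_boot all_order all_algebra.
From mathcomp Require Import all_classical all_reals all_analysis.
From mathcomp Require Import complex.
Import Order.TTheory GRing.Theory Num.Theory.
Local Open Scope ring_scope.
Local Open Scope classical_set_scope.
Set Implicit Arguments.
Unset Strict Implicit.

Section IP.
Variables (C : numClosedFieldType) (V : lmodType C) (ip : V -> V -> C).
Hypothesis hip : is_inner_product ip.

Lemma ipPl a x y z : ip (a *: x + y) z = a * ip x z + ip y z.
Proof. by case: hip. Qed.
Lemma ipC x y : ip y x = (ip x y)^*.
Proof. by case: hip. Qed.
Lemma ip_ge0 x : 0 <= ip x x.
Proof. by case: hip. Qed.
Lemma ip_eq0 x : ip x x = 0 -> x = 0.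
Proof. by case: hip => _ _ _; apply. Qed.

Lemma ipDl x y z : ip (x + y) z = ip x z + ip y z.
Proof. by have := ipPl 1 x y z; rewrite scale1r mul1r. Qed.
Lemma ip0l z : ip 0 z = 0.
Proof. by apply: (addrI (ip 0 z)); rewrite -ipDl !addr0. Qed.
Lemma ipZl a x z : ip (a *: x) z = a * ip x z.
Proof. by rewrite -[a *: x]addr0 ipPl ip0l addr0. Qed.
Lemma ipNl x z : ip (- x) z = - ip x z.
Proof. by rewrite -scaleN1r ipZl mulN1r. Qed.
Lemma ipBl x y z : ip (x - y) z = ip x z - ip y z.
Proof. by rewrite ipDl ipNl. Qed.
Lemma ipDr x y z : ip z (x + y) = ip z x + ip z y.
Proof. by rewrite ipC ipDl rmorphD [ip z x]ipC [ip z y]ipC. Qed.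
Lemma ipZr a x z : ip z (a *: x) = a^* * ip z x.
Proof. by rewrite ipC ipZl rmorphM [ip z x]ipC. Qed.
Lemma ip0r z : ip z 0 = 0.
Proof. by rewrite ipC ip0l rmorph0. Qed.
Lemma ipBr x y z : ip z (x - y) = ip z x - ip z y.
Proof. by rewrite ipC ipBl rmorphB [ip z x]ipC [ip z y]ipC. Qed.
Lemma ip_suml I (s : seq I) (F : I -> V) z :
  ip (\sum_(t <- s) F t) z = \sum_(t <- s) ip (F t) z.
Proof.
elim: s => [|t s IH]; first by rewrite !big_nil ip0l.
by rewrite !big_cons ipDl IH.
Qed.

Lemma ip_real x : ip x x \is Num.real.
Proof. exact/ger0_real/ip_ge0. Qed.

Lemma CS u v : `|ip u v| ^+ 2 <= ip u u * ip v v.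
Proof.
have [v0|nz] := eqVneq (ip v v) 0.
  have -> : v = 0 by apply: ip_eq0.
  by rewrite !ip0r normr0 expr0n /= mulr0.
pose a := ip u v / ip v v.
have o1 : ip (u - a *: v) v = 0 by rewrite ipBl ipZl /a divfK ?subrr.
have key : forall w, ip w v = 0 ->
    ip (w + a *: v) (w + a *: v) = ip w w + `|a| ^+ 2 * ip v v.
  move=> w ow; have o2 : ip v w = 0 by rewrite ipC ow rmorph0.
  rewrite ipDl !ipDr !ipZl !ipZr ow o2 !mulr0 addr0 add0r.
  by rewrite normCK mulrA [a * _]mulrC.
have := key _ o1; rewrite subrK => ->.
have vpos : 0 < ip v v by rewrite lt_def nz ip_ge0.
rewrite mulrDl -[X in X <= _]add0r lerD ?mulr_ge0 ?ip_ge0 //.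
rewrite /a normrM normfV (ger0_norm (ip_ge0 v)) exprMn exprVn.
by rewrite -mulrA -expr2 divfK ?expf_neq0.
Qed.

Lemma ipnorm_ge0 x : 0 <= ipnorm ip x.
Proof. by rewrite /ipnorm sqrtC_ge0 ip_ge0. Qed.
Lemma ipnorm_sq x : ipnorm ip x ^+ 2 = ip x x.
Proof. exact: sqrtCK. Qed.
Lemma ipnorm0 : ipnorm ip 0 = 0.
Proof. by rewrite /ipnorm ip0l sqrtC0. Qed.
Lemma ipnorm_eq0 x : ipnorm ip x = 0 -> x = 0.
Proof. by move=> /eqP; rewrite sqrtC_eq0 => /eqP /ip_eq0. Qed.

Lemma CSn u v : `|ip u v| <= ipnorm ip u * ipnorm ip v.
Proof.
rewrite -(sqrCK (normr_ge0 _)) /ipnorm -sqrtCM ?nnegrE ?ip_ge0 //.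
by rewrite ler_sqrtC ?nnegrE ?exprn_ge0 ?mulr_ge0 ?ip_ge0 ?CS.
Qed.

Lemma ipnormZ a x : ipnorm ip (a *: x) = `|a| * ipnorm ip x.
Proof.
rewrite /ipnorm ipZl ipZr mulrA -normCK sqrtCM ?nnegrE ?exprn_ge0 ?ip_ge0 //.
by rewrite sqrCK.
Qed.

Lemma ipnormN x : ipnorm ip (- x) = ipnorm ip x.
Proof. by rewrite -scaleN1r ipnormZ normrN normr1 mul1r. Qed.

Lemma ipnormB x y : ipnorm ip (x - y) = ipnorm ip (y - x).
Proof. by rewrite -ipnormN opprB. Qed.

Lemma ipnormD x y : ipnorm ip (x + y) <= ipnorm ip x + ipnorm ip y.
Proof.
rewrite -(@ler_pXn2r _ 2) ?nnegrE ?addr_ge0 ?ipnorm_ge0 //.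
rewrite ipnorm_sq sqrrD !ipnorm_sq.
have -> : ip (x + y) (x + y) = ip x x + ip y y + (ip x y + (ip x y)^*).
  rewrite ipDl !ipDr [ip y x]ipC.
  by rewrite -!addrA; congr (_ + _); rewrite [RHS]addrC -addrA.
rewrite [X in _ <= X]addrAC lerD2l.
have -> : ip x y + (ip x y)^* = ('Re (ip x y)) *+ 2.
  by rewrite ReE -mulr_natr divfK // pnatr_eq0.
rewrite lerMn2r /=.
apply: le_trans (CSn x y).
by case: (leif_Re_Creal (ip x y)).
Qed.

End IP.

Section Aux.
Variable C : numClosedFieldType.
Lemma small0 (c : C) : (forall eps, 0 < eps -> `|c| < eps) -> c = 0.
Proof.
move=> H; apply/eqP; rewrite -normr_eq0; apply/negPn/negP => nz.
by have := H `|c|; rewrite normr_gt0 -normr_eq0 nz ltxx => /(_ isT).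
Qed.
Lemma min_pos (x y : C) : 0 < x -> 0 < y -> exists2 z, 0 < z & (z <= x) && (z <= y).
Proof.
move=> x0 y0; case: (real_leP (gtr0_real x0) (gtr0_real y0)) => h.
  by exists x => //; rewrite lexx h.
by exists y => //; rewrite lexx (ltW h).
Qed.
End Aux.

Section Tens.
Variables (C : numClosedFieldType) (H1 H2 H : lmodType C).
Variables (ip1 : H1 -> H1 -> C) (ip2 : H2 -> H2 -> C) (ip : H -> H -> C).
Variables (tens : H1 -> H2 -> H) (pip : H -> H2 -> H1).
Hypotheses (h1 : is_inner_product ip1) (h2 : is_inner_product ip2)
  (h : is_inner_product ip).
Hypotheses (ht : is_hilbert_tensor ip1 ip2 ip tens)
  (hp : is_partial_ip ip1 ip2 ip tens pip).

Lemma tens_ip a b c d : ip (tens a b) (tens c d) = ip1 a c * ip2 b d.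
Proof. by case: ht. Qed.
Lemma tens_lin c a a' b : tens (c *: a + a') b = c *: tens a b + tens a' b.
Proof. by case: ht. Qed.
Lemma tens_dense f eps : 0 < eps -> exists s : seq (C * H1 * H2),
   ipnorm ip (f - \sum_(t <- s) t.1.1 *: tens t.1.2 t.2) < eps.
Proof. by case: ht => _ _ _; apply. Qed.
Lemma tensnorm a b : ipnorm ip (tens a b) = ipnorm ip1 a * ipnorm ip2 b.
Proof. by rewrite /ipnorm tens_ip sqrtCM // nnegrE ip_ge0. Qed.

Lemma pip_sum (s : seq (C * H1 * H2)) g :
  pip (\sum_(t <- s) t.1.1 *: tens t.1.2 t.2) g
        = \sum_(t <- s) (t.1.1 * ip2 t.2 g) *: t.1.2.
Proof. by case: (hp g). Qed.

Lemma pip_ip f g a : ip1 (pip f g) a = ip f (tens a g).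
Proof.
apply/eqP; rewrite -subr_eq0; apply/eqP/small0 => eps eps0.
pose K := ipnorm ip1 a + ipnorm ip (tens a g) + 1.
have K0 : 0 < K by rewrite /K ltr_wpDl ?addr_ge0 ?ipnorm_ge0.
pose e' := eps / K.
have e'0 : 0 < e' by rewrite /e' divr_gt0.
have [delta d0 Hd] := (hp g).2 f e' e'0.
have [m m0 /andP[md me]] := min_pos d0 e'0.
have [s Hs] := tens_dense f m0.
set F := \sum_(t <- s) _ in Hs.
rewrite (ipnormB h) in Hs.
have Hp := Hd F (lt_le_trans Hs md).
have eq : ip1 (pip F g) a = ip F (tens a g).
  rewrite pip_sum !(ip_suml h1, ip_suml h); apply: eq_bigr => t _.
  by rewrite (ipZl h1) (ipZl h) tens_ip mulrA mulrAC.
have -> : ip1 (pip f g) a - ip f (tens a g)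
    = ip1 (pip f g - pip F g) a + ip (F - f) (tens a g).
  by rewrite (ipBl h1) (ipBl h) eq addrA subrK.
apply: (le_lt_trans (ler_normD _ _)).
apply: (@le_lt_trans _ _ (e' * ipnorm ip1 a + e' * ipnorm ip (tens a g))).
  apply: lerD.
    apply: le_trans (CSn h1 _ _) _; apply: ler_wpM2r; first exact: ipnorm_ge0.
    by rewrite (ipnormB h1) ltW.
  apply: le_trans (CSn h _ _) _; apply: ler_wpM2r; first exact: ipnorm_ge0.
  exact: ltW (lt_le_trans Hs me).
rewrite -mulrDr -[X in _ < X](divfK (lt0r_neq0 K0))  -/e' ltr_pM2l //.
by rewrite /K ltrDl ltr01.
Qed.

Lemma pipP a f f' g : pip (a *: f + f') g = a *: pip f g + pip f' g.
Proof.
apply/eqP; rewrite -subr_eq0; apply/eqP/(ip_eq0 h1).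
set X := _ - _.
by rewrite {1}/X (ipBl h1) (ipPl h1) !pip_ip (ipPl h) subrr.
Qed.

Lemma pipB f f' g : pip (f - f') g = pip f g - pip f' g.
Proof.
have := pipP (-1) f' f g; rewrite !scaleN1r => E.
by rewrite addrC E addrC.
Qed.

Lemma pip_norm f g : ipnorm ip1 (pip f g) <= ipnorm ip f * ipnorm ip2 g.
Proof.
set p := pip f g.
have E : ip1 p p = ip f (tens p g) by rewrite /p pip_ip.
have Hq : ipnorm ip1 p ^+ 2 <= ipnorm ip1 p * (ipnorm ip f * ipnorm ip2 g).
  rewrite (ipnorm_sq ip1) -(ger0_norm (ip_ge0 h1 p)) E.
  by apply: le_trans (CSn h _ _) _; rewrite tensnorm mulrCA.
have [->|nz] := eqVneq (ipnorm ip1 p) 0.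
  by rewrite mulr_ge0 ?ipnorm_ge0.
have pos : 0 < ipnorm ip1 p by rewrite lt_def nz ipnorm_ge0.
by rewrite -(ler_pM2l pos) -expr2.
Qed.

End Tens.

Section Frame.
Variables (C : numClosedFieldType) (H1 H2 H : lmodType C).
Variables (ip1 : H1 -> H1 -> C) (ip2 : H2 -> H2 -> C) (ip : H -> H -> C).
Variables (tens : H1 -> H2 -> H) (pip : H -> H2 -> H1).
Hypotheses (h1 : is_inner_product ip1) (h2 : is_inner_product ip2)
  (h : is_inner_product ip).
Hypotheses (ht : is_hilbert_tensor ip1 ip2 ip tens)
  (hp : is_partial_ip ip1 ip2 ip tens pip).
Variables (G : topologicalType) (psi : G -> H2) (B : C).
Hypotheses (B0 : 0 <= B) (hB : forall z, ipnorm ip2 (psi z) <= B).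
Hypothesis hw : forall g (eps : C), 0 < eps ->
  exists2 K : set G, compact K & forall z, ~ K z -> `|ip2 (psi z) g| < eps.

Lemma half_gt0 (eps : C) : 0 < eps -> 0 < eps / 2.
Proof. by move=> e0; rewrite divr_gt0 // ltr0n. Qed.

Lemma frac_le (c e : C) : 0 <= c -> 0 <= e -> c * (e / (c + 1)) <= e.
Proof.
move=> c0 e0.
have c1 : 0 < c + 1 by rewrite ltr_wpDl.
apply: (@le_trans _ _ ((c + 1) * (e / (c + 1)))).
  by apply: ler_wpM2r; [rewrite divr_ge0 // ltW | rewrite lerDl ler01].
by rewrite mulrC divfK // lt0r_neq0.
Qed.

Lemma sum_small (s : seq (C * H1 * H2)) (eps : C) : 0 < eps ->
  exists2 K : set G, compact K & forall w, ~ K w ->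
    ipnorm ip1 (\sum_(t <- s) (t.1.1 * ip2 t.2 (psi w)) *: t.1.2) < eps.
Proof.
elim: s eps => [|t s IH] eps e0.
  by exists set0 => [|w _]; rewrite ?big_nil ?(ipnorm0 h1) //; exact: compact0.
have e2 := half_gt0 e0.
have [K1 cK1 HK1] := IH _ e2.
pose c := `|t.1.1| * ipnorm ip1 t.1.2.
have c0 : 0 <= c by rewrite mulr_ge0 ?normr_ge0 ?ipnorm_ge0.
pose e' := eps / 2 / (c + 1).
have e'0 : 0 < e' by rewrite divr_gt0 // ltr_wpDl.
have [K2 cK2 HK2] := hw t.2 e'0.
exists (K1 `|` K2); first exact: compactU.
move=> w /not_orP [n1 n2].
rewrite big_cons; apply: le_lt_trans (ipnormD h1 _ _) _.
rewrite [X in _ < X]splitr; apply: ler_ltD; last exact: HK1.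
rewrite (ipnormZ h1) normrM (ipC h2) norm_conjC.
apply: le_trans (frac_le c0 (ltW e2)).
rewrite -/e' mulrAC -/c ler_wpM2l //.
exact: ltW (HK2 _ n2).
Qed.

Lemma pip_small f (eps : C) : 0 < eps ->
  exists2 K : set G, compact K & forall w, ~ K w ->
    ipnorm ip1 (pip f (psi w)) < eps.
Proof.
move=> e0; have e2 := half_gt0 e0.
pose eb := eps / 2 / (B + 1).
have eb0 : 0 < eb by rewrite divr_gt0 // ltr_wpDl.
have [s Hs] := tens_dense ht f eb0.
set F := \sum_(t <- s) _ in Hs.
have [K cK HK] := sum_small s e2.
exists K => // w nw.
have -> : pip f (psi w) = pip (f - F) (psi w) + pip F (psi w).
  by rewrite (pipB h1 h ht hp) subrK.
apply: le_lt_trans (ipnormD h1 _ _) _.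
rewrite [X in _ < X]splitr; apply: ler_ltD; last by rewrite /F (pip_sum hp); exact: HK.
apply: le_trans (pip_norm h1 h2 h ht hp _ _) _.
apply: le_trans (frac_le B0 (ltW e2)).
rewrite mulrC -/eb; apply: ler_pM; rewrite ?ipnorm_ge0 //.
exact: ltW Hs.
Qed.

End Frame.

Lemma E_mono (G : Type) (E : nat -> set G) : (forall N, E N `<=` E N.+1) ->
  forall m n, (m <= n)%N -> E m `<=` E n.
Proof.
move=> hE m n /subnK <-; elim: (n - m)%N => [|k IH] //=.
by rewrite addSn; apply: subset_trans IH (hE _).
Qed.

Lemma phi_ge (phi : nat -> nat) : (forall n, phi n < phi n.+1)%N ->
  forall n, (n <= phi n)%N.
Proof. by move=> H; elim => // n IH; apply: leq_ltn_trans IH (H n). Qed.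

Lemma compact_in_E (G : ptopologicalType) (E : nat -> set G) :
  (forall N, open (E N)) -> (forall N, E N `<=` E N.+1) ->
  \bigcup_N E N = setT -> forall K, compact K -> exists N, K `<=` E N.
Proof.
move=> op mono cov K; rewrite compact_cover => cK.
have sub : K `<=` cover setT E by move=> x _; rewrite /cover cov.
have [D' _ HD'] := cK nat setT E (fun i _ => op i) sub.
exists (\max_(i <- finmap.enum_fset D') i)%N => x /HD' [i Di Ex].
apply: (E_mono mono _ Ex).
exact: (@leq_bigmax_seq _ _ xpredT id i).
Qed.

Theorem proposition4p4 (R : realType)
  (H1 : lmodType R[i]) (ip1 : H1 -> H1 -> R[i]) (hH1 : is_sep_hilbert ip1)
  (H2 : lmodType R[i]) (ip2 : H2 -> H2 -> R[i]) (hH2 : is_sep_hilbert ip2)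
  (H : lmodType R[i]) (ip : H -> H -> R[i]) (hH : is_sep_hilbert ip)
  (tens : H1 -> H2 -> H) (htens : is_hilbert_tensor ip1 ip2 ip tens)
  (pip : H -> H2 -> H1) (hpip : is_partial_ip ip1 ip2 ip tens pip)
  (G : ptopologicalType) (mul : G -> G -> G) (inv : G -> G) (e : G)
  (hG : is_sep_lc_group mul inv e)
  (mu : {measure set borelG G -> \bar R}) (hmu : is_left_haar mul mu)
  (E : nat -> set G) (hE : is_exhaustion mul inv E)
  (psi : G -> H2) (hpsi : is_cont_parseval_frame mu ip2 psi)
  (T : H -> H) (hT : compact_op ip ip T)
  (hweak : forall g : H2, tends_to_zero_at_infty (fun z => ip2 (psi z) g)) :
  weakly_compact mul E ip1 tens pip psi T.
Proof.
case: hH1 => h1 _ _; case: hH2 => h2 _ _; case: hH => h _ _.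
case: hT => Tlin Tcomp.
case: hpsi => [[B hB] _ _].
have B0 : 0 <= B := le_trans (ipnorm_ge0 h2 (psi e)) (hB e).
have Tl : forall z w, is_linear_map (Tzw tens pip psi T z w).
  by move=> z w a x y; rewrite /Tzw (tens_lin htens) Tlin (pipP h1 h htens hpip).
have Tz0 : forall z w, Tzw tens pip psi T z w 0 = 0.
  move=> z w; have := Tl z w 1 0 0; rewrite !scale1r !addr0 => E0.
  by apply: (addrI (Tzw tens pip psi T z w 0)); rewrite -E0 addr0.
have TZ : forall z w a x, Tzw tens pip psi T z w (a *: x) = a *: Tzw tens pip psi T z w x.
  by move=> z w a x; have := Tl z w a x 0; rewrite !addr0 Tz0 addr0.
split.
  move=> z w; split; first exact: Tl.
  move=> u [Bu hBu].
  have xb : exists B', forall n, ipnorm ip (tens (u n) (psi z)) <= B'.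
    exists (Bu * ipnorm ip2 (psi z)) => n.
    by rewrite (tensnorm h1 h2 htens) ler_wpM2r ?ipnorm_ge0.
  have [phi [hphi [l hl]]] := Tcomp _ xb.
  exists phi; split => //; exists (pip l (psi w)) => eps e0.
  have [delta d0 Hd] := (hpip (psi w)).2 l eps e0.
  have [N HN] := hl delta d0; exists N => n Nn; exact: Hd _ (HN n Nn).
move=> M M0 eps e0.
apply: contrapT => nK.
case: hE => hop hmono hinv hprod hcov.
case: hG => [[hassoc [hidl hidr] [hinvl hinvr]] _ _ _ _].
have step : forall N, exists p : G * G * H1,
   [/\ ~ E (N + M)%N p.1.2, ipnorm ip1 p.2 = 1 &
       eps < ipnorm ip1 (Tzw tens pip psi T p.1.1 p.1.2 p.2)].
  move=> N.
  have cK : compact (closure (E (2 * (N + M))%N)) by case: (hop (2 * (N + M))%N).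
  apply: contrapT => nex; apply: nK.
  exists (closure (E (2 * (N + M))%N)) => // z zK w [x Ex ->] hh.
  apply: contrapT => nle; apply: nex.
  have EM : forall y, E M y -> E (N + M)%N y.
    by move=> y; apply: E_mono => //; rewrite leq_addl.
  have nw : ~ E (N + M)%N (mul z x).
    move=> Ew; apply: zK; apply: subset_closure.
    have -> : z = mul (mul z x) (inv x) by rewrite -hassoc hinvr hidr.
    apply: (hprod (N + M)%N); exists (mul z x) => //; exists (inv x) => //.
    by apply: EM; rewrite -(hinv M); exists x.
  set a := ipnorm ip1 hh.
  have lt : eps * a < ipnorm ip1 (Tzw tens pip psi T z (mul z x) hh).
    rewrite real_ltNge; first exact/negP.
      by rewrite ger0_real // mulr_ge0 ?ipnorm_ge0 // ltW.
    by rewrite ger0_real // ipnorm_ge0.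
  have a0 : a != 0.
    apply/eqP => a0; move: lt; rewrite a0 mulr0.
    have -> : hh = 0 by apply: (ipnorm_eq0 h1).
    by rewrite Tz0 (ipnorm0 h1) ltxx.
  have apos : 0 < a by rewrite lt_def a0 ipnorm_ge0.
  exists (z, mul z x, a^-1 *: hh); split => //=.
    by rewrite (ipnormZ h1) ger0_norm ?invr_ge0 ?ltW // mulVf.
  rewrite TZ (ipnormZ h1) ger0_norm ?invr_ge0 ?ltW //.
  by rewrite -(ltr_pM2l apos) mulrA mulfV // mul1r mulrC.
case: (choice step) => f Hf.
pose xs N := tens (f N).2 (psi (f N).1.1).
have xsb : exists B', forall n, ipnorm ip (xs n) <= B'.
  exists B => n; rewrite /xs (tensnorm h1 h2 htens).
  by have [_ -> _] := Hf n; rewrite mul1r.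
have [phi [hphi [l hl]]] := Tcomp _ xsb.
have e2 := half_gt0 e0.
have [K cK HK] := pip_small h1 h2 h htens hpip B0 hB hweak l e2.
have [N0 KN0] := compact_in_E (fun N => (hop N).1) hmono hcov cK.
pose eb := eps / 2 / (B + 1).
have eb0 : 0 < eb by rewrite divr_gt0 // ltr_wpDl.
have [N1 HN1] := hl eb eb0.
pose n := maxn N0 N1.
pose m := phi n.
have [wnot _ big] := Hf m.
have nKw : ~ K (f m).1.2.
  move=> Kw; apply: wnot; apply: (E_mono hmono _ (KN0 _ Kw)).
  apply: leq_trans (leq_addr _ _).
  exact: leq_trans (leq_maxl N0 N1) (phi_ge hphi n).
have Hn := HN1 n (leq_maxr N0 N1).
have : ipnorm ip1 (Tzw tens pip psi T (f m).1.1 (f m).1.2 (f m).2) < eps.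
  rewrite /Tzw -/(xs m).
  have -> : pip (T (xs m)) (psi (f m).1.2)
      = pip (T (xs m) - l) (psi (f m).1.2) + pip l (psi (f m).1.2).
    by rewrite (pipB h1 h htens hpip) subrK.
  apply: le_lt_trans (ipnormD h1 _ _) _.
  rewrite [X in _ < X]splitr; apply: ler_ltD; last exact: HK.
  apply: le_trans (pip_norm h1 h2 h htens hpip _ _) _.
  apply: le_trans (frac_le B0 (ltW e2)).
  rewrite mulrC -/eb; apply: ler_pM; rewrite ?ipnorm_ge0 //; try exact: hB.
  exact: ltW Hn.
by move=> /(lt_trans big); rewrite ltxx.
Qed.
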